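(* Let $X$ be a Banach space and $\kappa$ an infinite cardinal. If $X$ is $\mathrm{ASQ}_{<\kappa}$, then $X$ has the $\mathrm{SD2P}_{<\kappa}$. Moreover, if $\kappa$ is uncountable and $X$ is $\mathrm{SQ}_{<\kappa}$, then $X$ has the $1$-$\mathrm{ASD2P}_{<\kappa}$.
   Context: A Banach space $X$ is $\mathrm{ASQ}_{<\kappa}$ if for every set $A\subset S_X$ with $|A|<\kappa$ and every $\varepsilon>0$ there exists $y\in S_X$ with $\|x\pm y\|\le 1+\varepsilon$ for all $x\in A$; it is $\mathrm{SQ}_{<\kappa}$ if for every such $A$ there exists $y\in S_X$ with $\|x\pm y\|\le 1$ for all $x\in A$. For $\delta>0$, a set $B\subset S_X$ is said to $\delta$-norm a set $A\subset S_{X^*}$ if $\sup_{x\in B}y^*(x)\ge\delta$ for every $y^*\in A$. $X$ has the $\mathrm{SD2P}_{<\kappa}$ if for every $A\subset S_{X^*}$ with $|A|<\kappa$ and every $\varepsilon>0$ there exist $B\subset S_X$ and $x^*\in S_{X^*}$ such that $x^*(x)\ge 1-\varepsilon$ for all $x\in B$ and $B$ $(1-\varepsilon)$-norms $A$. $X$ has the $1$-$\mathrm{ASD2P}_{<\kappa}$ if for every $A\subset S_{X^*}$ with $|A|<\kappa$ there exist $B\subset S_X$ and $x^*\in S_{X^*}$ such that $x^*(x)=1$ for all $x\in B$ and $B$ $1$-norms $A$. *)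

(* Defs.v *)
From HB Require Import structures.
From mathcomp Require Import all_boot all_order all_algebra.
From mathcomp Require Import all_classical all_reals all_analysis.
Set Implicit Arguments. Unset Strict Implicit. Unset Printing Implicit Defensive.
Import Order.TTheory GRing.Theory Num.Theory.
Import numFieldNormedType.Exports.
Local Open Scope classical_set_scope.
Local Open Scope ring_scope.

Section Defs.
Variables (R : realType) (X : normedModType R).

(* cardinality |A| < kappa, kappa represented as the cardinal of the type K *)
Definition card_lt (T K : Type) (A : set T) :=
  (A #<= [set: K])%card /\ ~ ([set: K] #<= A)%card.

Definition sphere : set X := [set x | `|x| = 1].

Definition is_functional (f : X -> R) :=
  (forall (a : R) (x y : X), f (a *: x + y) = a * f x + f y) /\ continuous f.

Definition dual_norm (f : X -> R) : R :=
  sup [set `|f x| | x in [set x : X | `|x| <= 1]].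

Definition dual_sphere : set (X -> R) :=
  [set f | is_functional f /\ dual_norm f = 1].

(* B delta-norms A : sup_{x in B} y^*(x) >= delta for every y^* in A
   (sup taken in the extended reals, so sup over empty B is -oo) *)
Definition dnorms (delta : R) (B : set X) (A : set (X -> R)) :=
  forall ys, A ys -> forall t, t < delta -> exists2 x, B x & t < ys x.

Definition ASQ_lt (K : Type) :=
  forall A : set X, A `<=` sphere -> card_lt K A ->
  forall eps : R, 0 < eps ->
  exists2 y, sphere y &
    forall x, A x -> `|x + y| <= 1 + eps /\ `|x - y| <= 1 + eps.

Definition SQ_lt (K : Type) :=
  forall A : set X, A `<=` sphere -> card_lt K A ->
  exists2 y, sphere y &
    forall x, A x -> `|x + y| <= 1 /\ `|x - y| <= 1.

Definition SD2P_lt (K : Type) :=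
  forall A : set (X -> R), A `<=` dual_sphere -> card_lt K A ->
  forall eps : R, 0 < eps ->
  exists B : set X, exists xs : X -> R,
    [/\ B `<=` sphere, dual_sphere xs,
        (forall x, B x -> 1 - eps <= xs x) & dnorms (1 - eps) B A].

Definition ASD2P1_lt (K : Type) :=
  forall A : set (X -> R), A `<=` dual_sphere -> card_lt K A ->
  exists B : set X, exists xs : X -> R,
    [/\ B `<=` sphere, dual_sphere xs,
        (forall x, B x -> xs x = 1) & dnorms 1 B A].

End Defs.

(* Main.v *)
Require Import Defs.
From HB Require Import structures.
From mathcomp Require Import all_boot all_order all_algebra.
From mathcomp Require Import all_classical all_reals all_analysis.
From mathcomp Require Import zify ring lra.
Import Order.TTheory GRing.Theory Num.Theory.
Import numFieldNormedType.Exports.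
Local Open Scope classical_set_scope.
Set Implicit Arguments. Unset Strict Implicit. Unset Printing Implicit Defensive.

Lemma card_le_fun {T U} (A : set T) (B : set U) (f : T -> U) :
  (forall x, A x -> B (f x)) -> (forall x y, A x -> A y -> f x = f y -> x = y) ->
  (A #<= B)%card.
Proof.
move=> fAB finj; have : $|{injfun A >-> B}|.
  by apply/injfunPex; exists f => // x y /set_mem Ax /set_mem Ay; exact: finj.
by case=> g; exact: inj_card_le.
Qed.

Lemma card_leE {T} {U : pointedType} (A : set T) (B : set U) : (A #<= B)%card ->
  exists f : T -> U, (forall x, A x -> B (f x)) /\
    (forall x y, A x -> A y -> f x = f y -> x = y).
Proof.
move/pcard_leP => [g]; exists g; split; first exact: funS.
by move=> x y Ax Ay; apply: inj; exact: mem_set.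
Qed.

Lemma nat2_bij : exists c : nat * nat -> nat,
  (forall p q, c p = c q -> p = q) /\ (forall m, exists p, c p = m).
Proof.
have /bijPex [c [_ cinj csurj]] : $|{bij [set: nat * nat] >-> [set: nat]}|.
  by apply/pcard_eqP; exact: card_nat2.
exists c; split; first by move=> p q; apply: cinj; rewrite inE.
by move=> m; have [p _ <-] := csurj m I; exists p.
Qed.

Section Good2.
Variables (T : Type) (A : set T).

Definition good2 (G : set ((T * nat) * T)) :=
  [/\ (forall p b b', G (p,b) -> G (p,b') -> b = b'),
      (forall p p' b, G (p,b) -> G (p',b) -> p = p'),
      (forall p b, G (p,b) -> A b),
      (forall a n b, G ((a,n),b) -> exists p, G (p,a))
    & (forall a p n, G (p,a) -> exists b, G ((a,n),b))].

Lemma good2_chain : forall F : set (set ((T * nat) * T)), F `<=` good2 ->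
  total_on F subset -> good2 (\bigcup_(X in F) X).
Proof.
move=> F FP Ftot; split.
- move=> p b b' [G1 F1 G1p] [G2 F2 G2p].
  have [s|s] := Ftot _ _ F1 F2.
    by case: (FP _ F2) => h _ _ _ _; apply: h (s _ G1p) G2p.
  by case: (FP _ F1) => h _ _ _ _; apply: h G1p (s _ G2p).
- move=> p p' b [G1 F1 G1p] [G2 F2 G2p].
  have [s|s] := Ftot _ _ F1 F2.
    by case: (FP _ F2) => _ h _ _ _; apply: h (s _ G1p) G2p.
  by case: (FP _ F1) => _ h _ _ _; apply: h G1p (s _ G2p).
- by move=> p b [G1 F1 G1p]; case: (FP _ F1) => _ _ h _ _; apply: h G1p.
- move=> a n b [G1 F1 G1p]; case: (FP _ F1) => _ _ _ h _.
  by have [p Gp] := h _ _ _ G1p; exists p, G1.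
- move=> a p n [G1 F1 G1p]; case: (FP _ F1) => _ _ _ _ h.
  by have [b Gb] := h _ _ n G1p; exists b, G1.
Qed.

End Good2.

Lemma infinite_prodnat_le (T : Type) (A : set T) : infinite_set A ->
  (A `*` [set: nat] #<= A)%card.
Proof.
elim/Ppointed: T => T in A *.
  by move=> Ainf; exfalso; apply: Ainf; rewrite (empty_eq0 A); exact: finite_set0.
move=> Ainf.
have [M [gM Mmax]] : exists M, good2 A M /\ forall B, M `<` B -> ~ good2 A B.
  by apply: Zorn_bigcup; exact: good2_chain.
have [Mf Mi MA Mdom Mall] := gM.
pose D := [set b | exists p, M (p, b)].
have [c [cinj csurj]] := nat2_bij.
have Ffin : finite_set (A `\` D).
  apply: contrapT => /infiniteP /card_leE [e [eAD einj]].
  have einj' : forall i j, e i = e j -> i = j by move=> i j; apply: einj.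
  pose N := [set q | exists i n, q = ((e i, n), e (c (i, n)))].
  have eD : forall i, ~ D (e i) by move=> i; have [] := eAD i I.
  apply: (Mmax (M `|` N)).
    split; first by move=> q Mq; left.
    move=> /(_ ((e 0, 0), e (c (0, 0)))) h.
    have Mq : M ((e 0, 0), e (c (0, 0))) by apply: h; right; exists 0, 0.
    by have [p Mp] := Mdom _ _ _ Mq; apply: (eD 0); exists p.
  split.
  - move=> p b b' [Mp|[i [n eq1]]] [Mp'|[i' [n' eq2]]].
    + exact: Mf Mp Mp'.
    + case: eq2 => ep _; subst p; have [q Mq] := Mdom _ _ _ Mp; exfalso.
      by apply: (eD i'); exists q.
    + case: eq1 => ep _; subst p; have [q Mq] := Mdom _ _ _ Mp'; exfalso.
      by apply: (eD i); exists q.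
    + case: eq1 => ep ->; move: eq2; rewrite ep => -[/einj' <- <- ->] //.
  - move=> p p' b [Mp|[i [n eq1]]] [Mp'|[i' [n' eq2]]].
    + exact: Mi Mp Mp'.
    + case: eq2 => _ eb; exfalso; apply: (eD (c (i', n'))); rewrite -eb; by exists p.
    + case: eq1 => _ eb; exfalso; apply: (eD (c (i, n))); rewrite -eb; by exists p'.
    + case: eq1 => -> eb; case: eq2 => -> eb'; move: eb'; rewrite eb.
      by move=> /einj' /cinj [-> ->].
  - move=> p b [Mp|[i [n eq1]]]; first exact: MA Mp.
    by case: eq1 => _ ->; have [] := eAD (c (i, n)) I.
  - move=> a n b [Mp|[i [n' eq1]]].
      by have [p Mp'] := Mdom _ _ _ Mp; exists p; left.
    case: eq1 => -> _ _.
    by have [[j k] cjk] := csurj i; exists (e j, k); right; exists j, k; rewrite cjk.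
  - move=> a p n [Mp|[i [n' eq1]]].
      by have [b Mb] := Mall _ _ n Mp; exists b; left.
    case: eq1 => _ ->.
    by exists (e (c (c (i, n'), n))); right; exists (c (i, n')), n.
have DA : D `<=` A by move=> b [p Mp]; exact: MA Mp.
have Dinf : infinite_set D.
  move=> Dfin; apply: Ainf; apply: (@sub_finite_set _ _ (D `|` (A `\` D))).
    by move=> a Aa; have [Da|nDa] := pselect (D a); [left|right].
  by rewrite finite_setU.
have [d0 Dd0] := infinite_setN0 Dinf.
have /card_leE [idx [_ idxinj]] := finite_set_countable Ffin.
have hex : forall q : T * nat, exists b, D q.1 -> M (q, b).
  move=> q.
  have [Dq|nDq] := pselect (D q.1); last by exists point.
  by case: q Dq => a n [p Mp]; have [b Mb] := Mall _ _ n Mp; exists b.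
have [h hh] := choice hex.
pose phi (q : T * nat) := if `[< D q.1 >] then h (q.1, 2 * q.2)
                          else h (d0, (2 * c (idx q.1, q.2)).+1).
apply: (card_le_fun (f := phi)).
  move=> [a n] [Aa _]; rewrite /phi /=; case: asboolP => Da.
    exact: MA (hh (a, _) Da).
  exact: MA (hh (d0, _) Dd0).
move=> [a n] [a' n'] [Aa _] [Aa' _]; rewrite /phi /=.
case: asboolP => Da; case: asboolP => Da' e.
- have H1 := hh (a, 2 * n) Da; rewrite /= e in H1.
  have [-> ?] := Mi _ _ _ H1 (hh (a', 2 * n') Da').
  by congr pair; lia.
- have H1 := hh (a, 2 * n) Da; rewrite /= e in H1.
  by have [_ ?] := Mi _ _ _ H1 (hh (d0, (2 * c (idx a', n')).+1) Dd0); lia.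
- have H1 := hh (d0, (2 * c (idx a, n)).+1) Dd0; rewrite /= e in H1.
  by have [_ ?] := Mi _ _ _ H1 (hh (a', 2 * n') Da'); lia.
- have H1 := hh (d0, (2 * c (idx a, n)).+1) Dd0; rewrite /= e in H1.
  have /= eq2 := congr1 snd (Mi _ _ _ H1 (hh (d0, (2 * c (idx a', n')).+1) Dd0)).
  have : c (idx a, n) = c (idx a', n').
    by move: eq2 => /eqP; rewrite eqSS eqn_pmul2l // => /eqP.
  move=> /cinj [ei ->]; congr pair; apply: (idxinj _ _ _ _ ei); by split.
Qed.

Local Open Scope ring_scope.

Section Basics.
Variables (R : realType) (X : normedModType R).
Implicit Types (f : X -> R) (x y : X).

Lemma fun0 f : is_functional f -> f 0 = 0.
Proof.
case=> lin _; have := lin 1 0 0; rewrite scale1r addr0 mul1r => /eqP.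
by rewrite -subr_eq subrr eq_sym => /eqP.
Qed.

Lemma funZ f a x : is_functional f -> f (a *: x) = a * f x.
Proof. move=> hf; have := (hf.1 a x 0); rewrite addr0 fun0 // addr0; exact. Qed.

Lemma funD f x y : is_functional f -> f (x + y) = f x + f y.
Proof. move=> hf; have := (hf.1 1 x y); rewrite scale1r mul1r; exact. Qed.

Lemma funN f x : is_functional f -> f (- x) = - f x.
Proof. by move=> hf; rewrite -scaleN1r funZ // mulN1r. Qed.

Lemma funB f x y : is_functional f -> f (x - y) = f x - f y.
Proof. by move=> hf; rewrite funD // funN. Qed.

Lemma bounded_dual f : is_functional f -> (forall x, `|f x| <= `|x|) ->
  (exists y, `|y| = 1 /\ f y = 1) -> dual_sphere f.
Proof.
move=> hf hb [y [ny fy]]; split => //; apply/eqP; rewrite eq_le; apply/andP; split.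
  apply: ge_sup; first by exists `|f 0|, 0 => //=; rewrite normr0.
  by move=> _ [x /= x1 <-]; apply: le_trans (hb x) x1.
apply: ub_le_sup; last by exists y => //=; rewrite ?ny ?fy ?normr1.
by exists 1 => _ [x /= x1 <-]; apply: le_trans (hb x) x1.
Qed.

Lemma bounded_functional f :
  (forall (a : R) x y, f (a *: x + y) = a * f x + f y) ->
  (forall x, `|f x| <= `|x|) -> is_functional f.
Proof.
move=> lin hb; have hf0 : forall x y, f (x - y) = f x - f y.
  move=> x y; have := lin (-1) y x; rewrite scaleN1r mulN1r addrC => ->.
  by rewrite addrC.
split => // x; apply/cvgrPdist_lt => e e0.
near=> z; rewrite -hf0; apply: le_lt_trans (hb _) _.
near: z; apply: cvgr_dist_lt => //; exact: cvg_id.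
Unshelve. all: by end_near.
Qed.

Lemma dual_le f : dual_sphere f -> forall x, `|f x| <= `|x|.
Proof.
move=> [hf nf] x.
have hub : has_ubound [set `|f x| | x in [set x : X | `|x| <= 1]].
  apply: contrapT => hn; move: nf; rewrite /dual_norm sup_out.
    by move/eqP; rewrite eq_sym oner_eq0.
  by case.
have le1 : forall z : X, `|z| <= 1 -> `|f z| <= 1.
  move=> z z1; rewrite -nf; apply: ub_le_sup => //; by exists z.
have [->|x0] := eqVneq x 0; first by rewrite fun0 // normr0.
have nx : 0 < `|x| by rewrite normr_gt0.
have := le1 (`|x|^-1 *: x); rewrite normrZ normrV ?unitfE ?normr_eq0 // normr_id mulVf ?normr_eq0 //.
rewrite lexx => /(_ isT); rewrite funZ // normrM normrV ?unitfE ?normr_eq0 // normr_id.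
by rewrite ler_pdivrMl // mulr1.
Qed.

Lemma dual_near f : dual_sphere f -> forall d, 0 < d ->
  exists x, sphere x /\ 1 - d < f x.
Proof.
move=> hd d d0; have [hf nf] := hd.
pose d' := Order.min d (1/2).
have d'0 : 0 < d' by rewrite lt_min d0 /=; lra.
have d'1 : d' <= 1/2 by rewrite ge_min lexx orbT.
have d'd : d' <= d by rewrite ge_min lexx.
have : 1 - d' < dual_norm f by rewrite nf; lra.
move=> /sup_gt [].
  by exists `|f 0|, 0 => //=; rewrite normr0.
move=> _ [x /= x1 <-] hx.
have x0 : x != 0 by apply: contraTneq hx => ->; rewrite fun0 // normr0 -leNgt; lra.
have nx : 0 < `|x| by rewrite normr_gt0.
pose s : R := if 0 <= f x then 1 else -1.
have fs : s * f x = `|f x| by rewrite /s; case: ifP => h; [rewrite mul1r ger0_norm|rewrite mulN1r ltr0_norm // ltNge h].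
exists ((s / `|x|) *: x); split.
  rewrite /sphere /= normrZ normrM normrV ?unitfE ?normr_eq0 // normr_id.
  by rewrite /s; case: ifP => _; rewrite ?normrN normr1 mul1r mulVf ?normr_eq0.
rewrite funZ // mulrAC fs.
have : `|f x| <= `|f x| / `|x| by rewrite ler_pdivlMr // ler_piMr.
lra.
Qed.

End Basics.

Section HB.
Variables (R : realType) (X : normedModType R) (y : X).

Definition lin_graph (G : set (X * R)) :=
  forall a u v, G u -> G v -> G (a *: u.1 + v.1, a * u.2 + v.2).
Definition fun_graph (G : set (X * R)) := forall x r s, G (x,r) -> G (x,s) -> r = s.
Definition dom_graph (G : set (X * R)) := forall x r, G (x,r) -> r <= `|x|.
Definition good (G : set (X * R)) :=
  [/\ G (y,1), lin_graph G, fun_graph G & dom_graph G].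

Lemma good_sc G a u r : good G -> G (u, r) -> G (a *: u, a * r).
Proof.
case=> Gy lin _ _ Gu.
have G0 : G (0, 0).
  by have := lin (-1) _ _ Gy Gy; rewrite /= scaleN1r addNr mulN1r addNr.
by have := lin a _ _ Gu G0; rewrite /= !addr0.
Qed.

Lemma good_sub G u r v s : good G -> G (u, r) -> G (v, s) -> G (v - u, s - r).
Proof.
case=> Gy lin _ _ Gu Gv.
by have := lin (-1) _ _ Gu Gv; rewrite /= scaleN1r mulN1r addrC [- r + s]addrC.
Qed.

Lemma extend G x0 : good G -> (forall r, ~ G (x0, r)) ->
  exists G', G `<` G' /\ good G'.
Proof.
move=> gG nG; have [Gy lin fG dG] := gG.
have G0 : G (0, 0) by have := good_sc 0 gG Gy; rewrite scale0r mul0r.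
have key : forall u r v s, G (u,r) -> G (v,s) -> s - `|v - x0| <= `|u + x0| - r.
  move=> u r v s Gu Gv.
  have := lin 1 _ _ Gu Gv; rewrite /= scale1r mul1r => /dG h.
  have : `|u + v| <= `|u + x0| + `|v - x0|.
    have -> : u + v = (u + x0) + (v - x0) by rewrite addrACA subrr addr0.
    exact: ler_normD.
  lra.
pose L := [set z | exists v s, G (v,s) /\ z = s - `|v - x0|].
pose c := sup L.
have Lne : L !=set0 by exists (0 - `|0 - x0|), 0, 0.
have cU : forall v s, G (v,s) -> s - `|v - x0| <= c.
  move=> v s Gv; apply: ub_le_sup; last by exists v, s.
  by exists (`|0 + x0| - 0) => _ [v' [s' [Gv' ->]]]; apply: key.
have cL : forall u r, G (u,r) -> c <= `|u + x0| - r.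
  by move=> u r Gu; apply: ge_sup => // _ [v [s [Gv ->]]]; apply: key.
pose G' := [set p | exists u r t, G (u,r) /\ p = (u + t *: x0, r + t * c)].
have GG' : G `<=` G'.
  by move=> [u r] Gu; exists u, r, 0; rewrite scale0r addr0 mul0r addr0.
exists G'; split.
  split => // /(_ (x0, c)) h; apply: (nG c); apply: h.
  by exists 0, 0, 1; rewrite add0r scale1r add0r mul1r.
split.
- exact: GG'.
- move=> a _ _ [u1 [r1 [t1 [G1 ->]]]] [u2 [r2 [t2 [G2 ->]]]] /=.
  exists (a *: u1 + u2), (a * r1 + r2), (a * t1 + t2); split; first exact: (lin a _ _ G1 G2).
  congr pair; last by ring.
  by rewrite scalerDr scalerA scalerDl addrACA.
- move=> x r s [u [r1 [t [G1 [-> ->]]]]] [u' [r1' [t' [G1' [eqx ->]]]]].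
  have tt : t = t'.
    apply: contrapT => /eqP; rewrite -subr_eq0 => ntt.
    have e1 : (t - t') *: x0 = u' - u.
      by rewrite scalerBl -[t *: x0](addKr u) eqx addrA addrK addrC.
    have e2 : x0 = (t - t')^-1 *: (u' - u) by rewrite -e1 scalerA mulVf // scale1r.
    apply: (nG ((t - t')^-1 * (r1' - r1))); rewrite e2.
    exact: good_sc (good_sub gG G1 G1').
  subst t'; have uu : u = u' by move: eqx => /addIr.
  by subst u'; rewrite (fG _ _ _ G1 G1').
- move=> x r [u [r1 [t [G1 [-> ->]]]]].
  have [t0|t0|->] := ltgtP t 0; last by rewrite scale0r addr0 mul0r addr0; exact: dG.
  + pose s := - t; have s0 : 0 < s by rewrite /s oppr_gt0.
    have := cU _ _ (good_sc (s^-1) gG G1).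
    have -> : u + t *: x0 = s *: (s^-1 *: u - x0).
      by rewrite scalerBr scalerA mulfV ?gt_eqF // scale1r /s scaleNr opprK.
    rewrite normrZ gtr0_norm //.
    set n := `|_|; move=> h.
    have : s * (s^-1 * r1 - n) <= s * c by rewrite ler_pM2l.
    rewrite mulrBr mulrA mulfV ?gt_eqF // mul1r /s; lra.
  + have := cL _ _ (good_sc (t^-1) gG G1).
    have -> : u + t *: x0 = t *: (t^-1 *: u + x0).
      by rewrite scalerDr scalerA mulfV ?gt_eqF // scale1r.
    rewrite normrZ gtr0_norm //.
    set n := `|_|; move=> h.
    have : t * c <= t * (n - t^-1 * r1) by rewrite ler_pM2l.
    rewrite mulrBr mulrA mulfV ?gt_eqF // mul1r; lra.
Qed.

Lemma hahn_banach : `|y| = 1 -> exists f : X -> R,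
  [/\ forall (a : R) x z, f (a *: x + z) = a * f x + f z,
      forall x, `|f x| <= `|x| & f y = 1].
Proof.
move=> ny.
pose P := [set G | G = set0 \/ good G].
have [M [PM Mmax]] : exists M, P M /\ forall B, M `<` B -> ~ P B.
  apply: Zorn_bigcup => F FP Ftot.
  have [[G0 [FG0 [p G0p]]]|hn] := pselect (exists G0, F G0 /\ G0 !=set0); last first.
    left; apply/seteqP; split => // p [G FG Gp]; apply: hn; exists G; split => //.
    by exists p.
  have gF : forall G, F G -> G !=set0 -> good G.
    move=> G /FP [->|//] [q []].
  right; split.
  - by exists G0 => //; case: (gF _ FG0 (ex_intro _ p G0p)).
  - move=> a u v [G1 FG1 G1u] [G2 FG2 G2v].
    have g1 := gF _ FG1 (ex_intro _ u G1u); have g2 := gF _ FG2 (ex_intro _ v G2v).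
    have [s12|s21] := Ftot _ _ FG1 FG2.
      by exists G2 => //; case: g2 => _ l _ _; apply: l => //; apply: s12.
    by exists G1 => //; case: g1 => _ l _ _; apply: l => //; apply: s21.
  - move=> x r s [G1 FG1 G1u] [G2 FG2 G2v].
    have g1 := gF _ FG1 (ex_intro _ _ G1u); have g2 := gF _ FG2 (ex_intro _ _ G2v).
    have [s12|s21] := Ftot _ _ FG1 FG2.
      by case: g2 => _ _ l _; apply: (l x r s) => //; apply: s12.
    by case: g1 => _ _ l _; apply: (l x r s) => //; apply: s21.
  - move=> x r [G1 FG1 G1u].
    by case: (gF _ FG1 (ex_intro _ _ G1u)) => _ _ _ l; apply: l.
have gM : good M.
  case: PM => // M0.
  pose Gy := [set p | exists t, p = (t *: y, t)].
  exfalso; apply: (Mmax Gy).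
    rewrite M0; split => // /(_ (y, 1)) h.
    by have // := h (ex_intro _ 1 (congr1 (fun z => (z, 1)) (esym (scale1r y)))).
  right; split.
  - by exists 1; rewrite scale1r.
  - by move=> a _ _ [t1 ->] [t2 ->] /=; exists (a * t1 + t2); rewrite scalerDl scalerA.
  - move=> x r s [t1 [-> ->]] [t2 [e ->]].
    have : (t1 - t2) *: y = 0 by rewrite scalerBl e subrr.
    move/eqP; rewrite scaler_eq0 => /orP[|/eqP y0]; first by rewrite subr_eq0 => /eqP.
    by move: ny; rewrite y0 normr0 => /eqP; rewrite eq_sym oner_eq0.
  - move=> x r [t [-> ->]]; rewrite normrZ ny mulr1; exact: ler_norm.
have tot : forall x, exists r, M (x, r).
  move=> x0; apply: contrapT => hn.
  have [G' [MG' gG']] := extend gM (fun r h => hn (ex_intro _ r h)).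
  by apply: (Mmax G' MG'); right.
have [f hf] := choice tot.
have [My lin fM dM] := gM.
have flin : forall (a : R) x z, f (a *: x + z) = a * f x + f z.
  by move=> a x z; apply: (fM _ _ _ (hf _)); exact: (lin a _ _ (hf x) (hf z)).
exists f; split => //.
- move=> x; rewrite ler_norml; apply/andP; split; last exact: dM (hf x).
  have := dM _ _ (hf (- x)); rewrite normrN.
  have -> : f (- x) = - f x.
    have f0 : f 0 = 0.
      by have := good_sc 0 gM My; rewrite scale0r mul0r => /(fM _ _ _ (hf 0)).
    by have := flin (-1) x 0; rewrite scaleN1r addr0 mulN1r f0 addr0.
  lra.
- exact: fM (hf y) My.
Qed.

End HB.

Lemma num1 (R : realType) (eps d a n : R) : 0 < eps -> 0 < d -> 4 * d <= eps ->
  4 * d <= 1 -> 0 < n -> n <= 1 + d -> 1 - 3 * d <= a -> 1 - eps <= a / n.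
Proof.
move=> e0 d0 de d1 n0 nd ha; rewrite ler_pdivlMr //.
have [h|h] := lerP (1 - eps) 0.
  have : (1 - eps) * n <= 0 by rewrite mulr_le0_ge0 // ltW.
  lra.
have : (1 - eps) * n <= (1 - eps) * (1 + d) by rewrite ler_pM2l.
have : 0 <= eps * d by rewrite mulr_ge0 // ltW.
nra.
Qed.

Lemma card_lt_image (K T U : Type) (A : set T) (f : T -> U) :
  card_lt K A -> card_lt K (f @` A).
Proof.
move=> [h1 h2]; split; first exact: card_le_trans (card_image_le f A) h1.
by move=> h; apply: h2; exact: card_le_trans h (card_image_le f A).
Qed.

Unset Implicit Arguments.

Theorem proposition5p3 (R : realType) (X : completeNormedModType R) (K : Type) :
  infinite_set [set: K] ->
  (ASQ_lt X K -> SD2P_lt X K) /\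
  (~ countable [set: K] -> SQ_lt X K -> ASD2P1_lt X K).
Proof.
move=> Kinf; split.
- move=> asq A Asub Acard eps eps0.
  pose d := Order.min (eps / 4) (1 / 4).
  have d0 : 0 < d by rewrite lt_min; apply/andP; split; lra.
  have de : 4 * d <= eps.
    have : d <= eps / 4 by rewrite ge_min lexx.
    lra.
  have d1 : 4 * d <= 1.
    have : d <= 1 / 4 by rewrite ge_min lexx orbT.
    lra.
  have hx : forall f : X -> R, exists x, A f -> sphere x /\ 1 - d < f x.
    move=> f; have [Af|nAf] := pselect (A f); last by exists 0.
    by have [x hx] := dual_near (Asub f Af) d0; exists x.
  have [g hg] := choice hx.
  have Csub : g @` A `<=` @sphere R X by move=> _ [f Af <-]; case: (hg f Af).
  have [y sy hy] := asq _ Csub (card_lt_image g Acard) d d0.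
  have [xs [xlin xb xy]] := hahn_banach sy.
  have xsf := bounded_functional xlin xb.
  have xsd : dual_sphere xs by apply: bounded_dual => //; exists y.
  have core : forall f, A f -> [/\ 0 < `|g f + y|, `|g f + y| <= 1 + d,
      1 - 3 * d <= xs (g f + y) & 1 - 3 * d <= f (g f + y)].
    move=> f Af; have [sx fx] := hg f Af.
    have [hp hm] := hy (g f) (ex_intro2 _ _ f Af erefl).
    have fd := Asub f Af; have [ff _] := fd.
    have h1 := xb (g f - y); rewrite funB // xy in h1.
    have h2 := dual_le fd (g f - y); rewrite funB // in h2.
    have h3 := xb (g f + y); rewrite funD // xy in h3.
    move: h1 h2 h3; rewrite !ler_norml => /andP[h1 _] /andP[_ h2] /andP[_ h3].
    have e1 : xs (g f + y) = xs (g f) + xs y by apply: funD.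
    have e2 : f (g f + y) = f (g f) + f y by apply: funD.
    rewrite e1 e2 xy.
    split; try lra.
  exists [set `|g f + y|^-1 *: (g f + y) | f in A], xs; split => //.
  + move=> _ [f Af <-]; have [n0 _ _ _] := core f Af.
    rewrite /sphere /= normrZ normrV ?unitfE ?gt_eqF // normr_id mulVf ?gt_eqF //.
  + move=> _ [f Af <-]; have [n0 n1 h _] := core f Af.
    have -> : xs (`|g f + y|^-1 *: (g f + y)) = `|g f + y|^-1 * xs (g f + y) by apply: funZ.
    rewrite mulrC; exact: num1 h.
  + move=> f Af t ht; exists (`|g f + y|^-1 *: (g f + y)); first by exists f.
    have [n0 n1 _ h] := core f Af.
    have -> : f (`|g f + y|^-1 *: (g f + y)) = `|g f + y|^-1 * f (g f + y).
      by apply: funZ; exact: (Asub f Af).1.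
    rewrite mulrC; apply: lt_le_trans ht _; exact: num1 h.
- move=> Kunc sq A Asub Acard.
  have hx : forall p : (X -> R) * nat, exists x,
      A p.1 -> sphere x /\ 1 - (p.2.+1%:R)^-1 < p.1 x.
    move=> [f n]; have [Af|nAf] := pselect (A f); last by exists 0.
    have hn : 0 < (n.+1%:R : R)^-1 by rewrite invr_gt0 ltr0Sn.
    have [x hx] := dual_near (Asub f Af) hn.
    by exists x.
  have [g hg] := choice hx.
  have ANcard : card_lt K (A `*` [set: nat]).
    have [Afin|Ainf] := pselect (finite_set A).
      have cAN : countable (A `*` [set: nat]).
        by apply: countableX; [exact: finite_set_countable | exact: countableP].
      split; first by apply: card_le_trans cAN _; exact/infiniteP.
      by move=> h; apply: Kunc; exact: card_le_trans h cAN.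
    have hle := infinite_prodnat_le Ainf.
    case: Acard => h1 h2; split; first exact: card_le_trans hle h1.
    by move=> h; apply: h2; exact: card_le_trans h hle.
  have Csub : g @` (A `*` [set: nat]) `<=` @sphere R X.
    by move=> _ [[f n] [Af _] <-]; case: (hg (f, n) Af).
  have [y sy hy] := sq _ Csub (card_lt_image g ANcard).
  have [xs [xlin xb xy]] := hahn_banach sy.
  have xsf := bounded_functional xlin xb.
  have xsd : dual_sphere xs by apply: bounded_dual => //; exists y.
  exists [set b | sphere b /\ xs b = 1], xs; split => //.
  + by move=> b [].
  + by move=> b [].
  move=> f Af t ht.
  pose n := Num.truncn (2 / (1 - t)).
  have hn : 2 / (1 - t) < n.+1%:R := truncnS_gt _.
  have hn' : 2 * (n.+1%:R)^-1 < 1 - t.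
    rewrite ltr_pdivrMr ?subr_gt0 // in hn.
    by rewrite ltr_pdivrMr // mulrC.
  have [sx fx] := hg (f, n) Af; rewrite /= in fx.
  set x := g (f, n) in sx fx.
  have [hp hm] := hy x (ex_intro2 _ _ (f, n) (conj Af I) erefl).
  have fd := Asub f Af; have [ff _] := fd.
  have h1 := xb (x - y); rewrite funB // xy in h1.
  have h2 := dual_le fd (x - y); rewrite funB // in h2.
  have h3 := xb (x + y); rewrite funD // xy in h3.
  move: h1 h2 h3; rewrite !ler_norml => /andP[h1 _] /andP[_ h2] /andP[_ h3].
  have xs1 : xs (x + y) = 1 by rewrite funD // xy; lra.
  exists (x + y).
    split => //; rewrite /sphere /=; apply/eqP; rewrite eq_le hp /=.
    by have := xb (x + y); rewrite xs1 normr1.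
  have -> : f (x + y) = f x + f y by apply: funD.
  move: hn' fx; clearbody x n; move: (n.+1%:R : R)^-1 => u; lra.
Qed.
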